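(* Let $q$ be a prime power and $r,k\ge 2$ integers, $n=rk$. Let $g_{r,k}:\mathbb{F}_q^n\to\mathbb{F}_q$, $g_{r,k}(x_1,\dots,x_n)=\sum_{j=0}^{k-1}x_{jr+1}x_{jr+2}\cdots x_{jr+r}$. Then the linear code $$\mathcal{C}_{g_{r,k}}=\{(u\,g_{r,k}(x)+v\cdot x)_{x\in\mathbb{F}_q^n\setminus\{0\}}\ :\ u\in\mathbb{F}_q,\ v\in\mathbb{F}_q^n\}$$ satisfies Property (P).
   Context: Here $v\cdot x$ denotes the standard inner product $\sum_i v_ix_i$, and coordinates of codewords are indexed by the nonzero vectors $x\in\mathbb{F}_q^n$ in some fixed order. Property (P): every nonzero codeword $w=(w_1,\dots,w_N)$ satisfies $\{w_1,\dots,w_N\}=\mathbb{F}_q$, i.e. its coordinates take all $q$ values of $\mathbb{F}_q$. *)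

(* Defs.v *)
From HB Require Import structures.
From mathcomp Require Import all_boot all_order all_algebra all_field.
Set Implicit Arguments. Unset Strict Implicit. Unset Printing Implicit Defensive.
Import GRing.Theory.
Local Open Scope ring_scope.

Lemma blk_idx_proof (r k : nat) (j : 'I_k) (i : 'I_r) : (j * r + i < r * k)%N.
Proof.
case: j => j hj; case: i => i hi /=.
rewrite mulnC; apply: (@leq_trans (r * j + r)%N).
  by rewrite ltn_add2l.
by rewrite addnC -mulnS leq_mul2l hj orbT.
Qed.

Definition blk_idx (r k : nat) (j : 'I_k) (i : 'I_r) : 'I_(r * k) :=
  Ordinal (blk_idx_proof j i).

(* g_{r,k}(x) = sum_{j<k} prod_{i<r} x_{j r + i}  (0-based indices) *)
Definition g_rk (F : fieldType) (r k : nat) (x : 'rV[F]_(r * k)) : F :=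
  \sum_(j < k) \prod_(i < r) x 0 (blk_idx j i).

Definition dotv (F : fieldType) (n : nat) (v x : 'rV[F]_n) : F :=
  \sum_(i < n) v 0 i * x 0 i.

(* the coordinate of the codeword (u,v) at position x *)
Definition cw (F : fieldType) (r k : nat) (u : F) (v x : 'rV[F]_(r * k)) : F :=
  u * g_rk x + dotv v x.

(* Main.v *)
Require Import Defs.
From HB Require Import structures.
From mathcomp Require Import all_boot all_order all_algebra all_field.
From mathcomp Require Import zify.
Import GRing.Theory.
Local Open Scope ring_scope.

Section Aux.
Local Set Implicit Arguments.
Variables (F : finFieldType) (r k : nat).
Local Notation n := (r * k)%N.

Lemma g0 (x : 'rV[F]_n) :
  (forall j : 'I_k, exists i : 'I_r, x 0 (blk_idx j i) = 0) -> g_rk x = 0.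
Proof.
move=> H; rewrite /g_rk big1 // => j _; case: (H j) => i Hi.
by rewrite (bigD1 i) //= Hi mul0r.
Qed.

Definition e1 (p : 'I_n) (a : F) : 'rV[F]_n := \row_m (if m == p then a else 0).
Definition e2 (p q : 'I_n) (a b : F) : 'rV[F]_n :=
  \row_m (if m == p then a else if m == q then b else 0).

Lemma dot_e1 v p a : dotv v (e1 p a) = v 0 p * a.
Proof.
rewrite /dotv (bigD1 p) //= big1 ?addr0; first by rewrite mxE eqxx.
by move=> i /negbTE Hi; rewrite mxE Hi mulr0.
Qed.

Lemma dot_e2 v p q a b : p != q -> dotv v (e2 p q a b) = v 0 p * a + v 0 q * b.
Proof.
move=> Hpq; rewrite /dotv (bigD1 p) //= (bigD1 q) 1?eq_sym //= big1 ?addr0.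
  by rewrite !mxE eqxx eq_sym (negbTE Hpq) eqxx.
move=> i /andP [Hi Hq]; rewrite mxE (negbTE Hi) (negbTE Hq) mulr0 //.
Qed.

Lemma nz_of_entry (x : 'rV[F]_n) p : x 0 p != 0 -> x != 0.
Proof. by move=> H; apply/eqP => Hx; move: H; rewrite Hx mxE eqxx. Qed.

Lemma dot0 (v x : 'rV[F]_n) : (forall i, v 0 i = 0) -> dotv v x = 0.
Proof. by move=> H; rewrite /dotv big1 // => i _; rewrite H mul0r. Qed.

Lemma cw0 (r0 : (0 < r)%N) u (v : 'rV[F]_n) : cw u v 0 = 0.
Proof.
rewrite /cw (_ : g_rk 0 = 0) ?mulr0 ?add0r.
  by rewrite /dotv big1 // => i _; rewrite mxE mulr0.
by apply: g0 => j; exists (Ordinal r0); rewrite mxE.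
Qed.

End Aux.
Arguments e1 {F r k}.
Arguments e2 {F r k}.

Theorem mainTheorem8 (F : finFieldType) (r k : nat) :
  (2 <= r)%N -> (2 <= k)%N ->
  forall (u : F) (v : 'rV[F]_(r * k)),
    (exists x : 'rV[F]_(r * k), x != 0 /\ cw u v x != 0) ->
    forall a : F, exists x : 'rV[F]_(r * k), x != 0 /\ cw u v x = a.
Proof.
move=> hr hk u v [x0 [_ Hx0]] a.
have r0 : (0 < r)%N by lia.
have r1 : (1 < r)%N by lia.
have k0 : (0 < k)%N by lia.
have k1 : (1 < k)%N by lia.
set p := blk_idx (Ordinal k0) (Ordinal r0).
set q := blk_idx (Ordinal k1) (Ordinal r0).
have Hpq : p != q.
  apply/eqP => /(congr1 (@nat_of_ord _)) /=; lia.
have g_e1 : forall (p' : 'I_(r * k)) (b : F), g_rk (e1 p' b) = 0.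
  move=> p' b; apply: g0 => j.
  case: (eqVneq (blk_idx j (Ordinal r0)) p') => He.
    exists (Ordinal r1); rewrite mxE ifF //; apply/negbTE/eqP => E.
    by move: He; rewrite -E => /(congr1 (@nat_of_ord _)) /=; lia.
  by exists (Ordinal r0); rewrite mxE (negbTE He).
have g_e2 : forall b c : F, g_rk (e2 p q b c) = 0.
  move=> b c; apply: g0 => j; exists (Ordinal r1); rewrite mxE.
  have -> : (blk_idx j (Ordinal r1) == p) = false.
    by apply/negbTE/eqP => /(congr1 (@nat_of_ord _)) /=; lia.
  have -> : (blk_idx j (Ordinal r1) == q) = false.
    apply/negbTE/eqP => /(congr1 (@nat_of_ord _)) /=.
    case: j => [[|j] hj] /=; nia.
  by [].
have cwne : forall x, cw u v x = a -> a != 0 -> x != 0.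
  by move=> x Hx Ha; apply/eqP => E; move: Ha; rewrite -Hx E cw0 ?eqxx.
case: (eqVneq a 0) => Ha.
  case: (eqVneq (v 0 p) 0) => Hvp.
    exists (e1 p 1); split; first by apply: (@nz_of_entry F r k _ p); rewrite mxE eqxx oner_eq0.
    by rewrite /cw g_e1 dot_e1 Hvp Ha mulr0 add0r mul0r.
  exists (e2 p q (v 0 q) (- v 0 p)); split.
    apply: (@nz_of_entry F r k _ q); have Hqp : (q == p) = false by apply/negbTE; rewrite eq_sym.
    rewrite mxE Hqp eqxx.
    by rewrite oppr_eq0.
  by rewrite /cw g_e2 dot_e2 // mulr0 add0r Ha mulrN mulrC subrr.
case: (boolP [exists i, v 0 i != 0]) => Hv.
  case/existsP: Hv => i Hi.
  exists (e1 i (a / v 0 i)); split; last first.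
    by rewrite /cw g_e1 dot_e1 mulr0 add0r mulrC divfK.
  by apply: (cwne _ _ Ha); rewrite /cw g_e1 dot_e1 mulr0 add0r mulrC divfK.
have Hv0 : forall i, v 0 i = 0.
  by move=> i; apply/eqP; move/existsPn: Hv => /(_ i); rewrite negbK.
have Hu : u != 0.
  by apply/eqP => Hu; move: Hx0; rewrite /cw Hu mul0r add0r dot0 ?eqxx.
pose t := a / u.
pose x : 'rV[F]_(r * k) :=
  \row_m (if (m < r)%N then (if (m == 0%N :> nat) then t else 1) else 0).
have gx : g_rk x = t.
  rewrite /g_rk (bigD1 (Ordinal k0)) //= [X in _ + X]big1 ?addr0.
    rewrite (bigD1 (Ordinal r0)) //= big1 ?mulr1.
      by rewrite mxE /= mul0n add0n r0.
    move=> i Hi; rewrite mxE /= ltn_ord ifF //.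
    by apply/negbTE; move: Hi; apply: contra => /eqP E; apply/eqP/val_inj.
  move=> j Hj; rewrite (bigD1 (Ordinal r0)) //= mxE /=.
  rewrite ifF ?mul0r //; apply/negbTE; rewrite -leqNgt.
  case: j Hj => [[|j] hj] //= _; nia.
have cx : cw u v x = a by rewrite /cw gx dot0 // addr0 /t mulrC divfK.
by exists x; split => //; apply: (cwne _ cx Ha).
Qed.
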